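(* Let $J=\{1,2\}\times\{1,2\}$, let $(a_{i,j})$ be the square array of strongly matricially free Toeplitz operators $a_{i,j}=\ell_{i,j}+f_{i,j}(\ell_{i,j}^* )$ on $\mathcal{N}$, let $R_{i,j}$ be the R-transform of the distribution of $a_{i,j}$ in the state $\varphi_{i,j}$, let $A=\sum_{i,j}a_{i,j}$, and let $\mathcal{R}_A(z)=\sum_{i,j}R_{i,j}(z)1_{i,j}$ be the corresponding matricial R-transform and $C_A(z)=\frac1z+\mathcal{R}_A(z)$. Then for $|z|$ sufficiently small and positive, $C_A(z)$ has the multiplicative inverse $$B_A(z)=\frac{z}{1+z(R_{1,1}(z)+R_{2,2}(z))}\,p+\frac{z}{1+z(R_{1,1}(z)+R_{2,1}(z))}\,p_{1,1}+\frac{z}{1+z(R_{2,2}(z)+R_{1,2}(z))}\,p_{2,2}+\frac{z}{1+z(R_{1,2}(z)+R_{2,1}(z))}\,(p_{1,2}+p_{2,1}),$$ where the sums $R_{1,1}+R_{2,2}$, $R_{1,1}+R_{2,1}$, $R_{2,2}+R_{1,2}$, $R_{1,2}+R_{2,1}$ are the R-transforms of the free convolutions $\mu_{1,1}\boxplus\mu_{2,2}$, $\mu_{1,1}\boxplus\mu_{2,1}$, $\mu_{2,2}\boxplus\mu_{1,2}$, $\mu_{1,2}\boxplus\mu_{2,1}$ of the distributions $\mu_{i,j}$ of $a_{i,j}$ in $\varphi_{i,j}$.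
   Context: Fock space (square array). Let $(\alpha_{i,j})_{i,j\in\{1,2\}}$ be positive reals, $\{e_{i,j}\}$ orthonormal vectors, $\mathcal{F}$ the full Fock space over $\bigoplus_{i,j}\mathbb{C}e_{i,j}$ with vacuum $\Omega$. The strongly matricially free Fock space $\mathcal{N}\subseteq\mathcal{F}$ is the closed span of $\Omega$ and all simple tensors $e_{i_1,i_2}^{\otimes n_1}\otimes e_{i_2,i_3}^{\otimes n_2}\otimes\dots\otimes e_{i_{m-1},i_m}^{\otimes n_{m-1}}\otimes e_{i_m,i_m}^{\otimes n_m}$ ($m\ge1$, $n_k\ge1$, $i_1\neq\dots\neq i_m$). With $P$ the projection onto $\mathcal{N}$ and $\ell(e)w=e\otimes w$, set $\ell_{i,j}=\alpha_{i,j}P\ell(e_{i,j})|_{\mathcal{N}}$. Let $\mathcal{N}_{i,j}$ be the closed span of those simple tensors whose first factor is $e_{i,j}$, $p$ the projection onto $\mathbb{C}\Omega$ and $p_{i,j}$ the projection onto $\mathcal{N}_{i,j}$. Internal units: $1_{j,j}$ is the projection onto $\mathbb{C}\Omega\oplus\mathcal{N}_{j,j}$, and for $i\ne j$, $1_{i,j}$ is the projection onto $\mathcal{N}\ominus(\mathbb{C}\Omega\oplus\mathcal{N}_{i,i})$. States $\varphi_{i,j}(x)=\langle x\Omega_{i,j},\Omega_{i,j}\rangle$, $\Omega_{j,j}=\Omega$, $\Omega_{i,j}=e_{j,j}$ ($i\ne j$). Toeplitz operators: $a_{i,j}=\ell_{i,j}+f_{i,j}(\ell_{i,j}^* )$ for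 polynomials $f_{i,j}(w)=\sum_{n=0}^dc_{i,j}(n)w^n$, with $f_{i,j}(\ell_{i,j}^* ):=c_{i,j}(0)1_{i,j}+\sum_{n\ge1}c_{i,j}(n)(\ell_{i,j}^* )^n$. The R-transform of a distribution with moments $m_n$ is the power series $R$ analytic near $0$ with $G(1/z+R(z))=z$ for small $|z|>0$, $G(w)=\sum_n m_nw^{-n-1}$. *)

(* Defs.v *)
From HB Require Import structures.
From mathcomp Require Import all_boot all_order all_algebra.
From mathcomp Require Import complex.
From mathcomp Require Import all_classical all_reals all_analysis.
Set Implicit Arguments. Unset Strict Implicit. Unset Printing Implicit Defensive.
Import Order.TTheory GRing.Theory Num.Theory.
Import numFieldTopology.Exports numFieldNormedType.Exports.
Local Open Scope classical_set_scope.
Local Open Scope ring_scope.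

(* Topology/norm on the complex numbers R[i]: the one of R[i] as a normed
   field over itself (norm = complex modulus). *)
HB.instance Definition _ (R : rcfType) := NormedModule.copy R[i] R[i]^o.

Definition J := ('I_2 * 'I_2)%type.
Definition i1 : 'I_2 := ord0.
Definition i2 : 'I_2 := ord_max.

(* Simple tensors e_{x_1} (x) ... (x) e_{x_n} of the full Fock space are
   indexed by words (seq J); the empty word is the vacuum Omega.  The family
   of all words is an orthonormal basis of F. *)
Definition word := seq J.

(* Allowed transitions between consecutive letters of a basis tensor of N *)
Definition step (x y : J) : bool := (x == y) || ((x.1 != x.2) && (y.1 == x.2)).

(* adm w <=> w is Omega or a tensor
   e_{i1,i2}^{n1} (x) e_{i2,i3}^{n2} (x) ... (x) e_{im,im}^{nm}
   with n_k >= 1 and i_1 <> i_2 <> ... <> i_m, i.e. a basis vector of N. *)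
Definition adm (w : word) : bool :=
  if w is x :: s then path step x s && ((last x s).1 == (last x s).2) else true.

Section Fock.
Variable R : realType.
Local Notation C := R[i].

(* Vectors are given by their coefficients in the orthonormal basis of
   words; operators act on coefficient functions.  The vectors of N are those
   supported on admissible words. *)
Definition vec := word -> C.
Definition op := vec -> vec.

Definition inN (v : vec) : Prop := forall w, ~~ adm w -> v w = 0.

Definition basisv (u : word) : vec := fun w => if w == u then 1 else 0.

Definition proj (P : pred word) : op := fun v w => if P w then v w else 0.

Definition first_is (x : J) (w : word) : bool :=
  if w is y :: _ then y == x else false.

Definition pvac : op := proj (fun w => w == [::]).
Definition pJ (x : J) : op := proj (fun w => adm w && first_is x w).

Definition unitJ (x : J) : op :=
  if x.1 == x.2 then proj (fun w => adm w && ((w == [::]) || first_is x w))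
  else proj (fun w => adm w && (w != [::]) && ~~ first_is (x.1, x.1) w).

(* l_{i,j} = alpha_{i,j} P l(e_{i,j}) |_N  and its adjoint on N *)
Definition ellJ (alpha : J -> R) (x : J) : op := fun v w =>
  if w is y :: w' then (if (y == x) && adm w then (alpha x)%:C%C * v w' else 0)
  else 0.
Definition ellJadj (alpha : J -> R) (x : J) : op := fun v w =>
  if adm w then (alpha x)%:C%C * v (x :: w) else 0.

(* Toeplitz operator a_{i,j} = l_{i,j} + f_{i,j}(l_{i,j}^* ) with
   f(l^* ) = c(0) 1_{i,j} + sum_{n>=1} c(n) (l^* )^n *)
Definition toeplitz (alpha : J -> R) (f : J -> {poly C}) (x : J) : op :=
  fun v w => ellJ alpha x v w + (f x)`_0 * unitJ x v w
             + \sum_(1 <= n < size (f x)) (f x)`_n * iter n (ellJadj alpha x) v w.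

Definition OmegaJ (x : J) : word := if x.1 == x.2 then [::] else [:: (x.2, x.2)].

(* moments phi_{i,j}(a_{i,j}^n) = < a_{i,j}^n Omega_{i,j}, Omega_{i,j} > *)
Definition moments (alpha : J -> R) (f : J -> {poly C}) (x : J) (n : nat) : C :=
  iter n (toeplitz alpha f x) (basisv (OmegaJ x)) (OmegaJ x).

(* Rf is the R-transform of the distribution with moments m:
   Rf is given near 0 by a convergent power series, and
   G(1/z + Rf z) = z for small |z| > 0, where G(w) = sum_n m_n w^{-n-1}. *)
Definition is_Rtransform (m : nat -> C) (Rf : C -> C) : Prop :=
  (exists (r : nat -> C) (rho : C), 0 < rho /\
     forall z : C, `|z| < rho ->
       series (fun k => r k * z ^+ k) @ \oo --> Rf z) /\
  (exists delta : C, 0 < delta /\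
     forall z : C, 0 < `|z| < delta ->
       series (fun n => m n * (z^-1 + Rf z) ^- n.+1) @ \oo --> z).

Definition CA (Rt : J -> C -> C) (z : C) : op :=
  fun v w => z^-1 * v w + \sum_(x : J) Rt x z * unitJ x v w.

Definition BA (Rt : J -> C -> C) (z : C) : op :=
  fun v w =>
    z / (1 + z * (Rt (i1, i1) z + Rt (i2, i2) z)) * pvac v w
  + z / (1 + z * (Rt (i1, i1) z + Rt (i2, i1) z)) * pJ (i1, i1) v w
  + z / (1 + z * (Rt (i2, i2) z + Rt (i1, i2) z)) * pJ (i2, i2) v w
  + z / (1 + z * (Rt (i1, i2) z + Rt (i2, i1) z))
      * (pJ (i1, i2) v w + pJ (i2, i1) v w).

End Fock.

(* Main.v *)
Require Import Defs.
From HB Require Import structures.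
From mathcomp Require Import all_boot all_order all_algebra.
From mathcomp Require Import complex.
From mathcomp Require Import all_classical all_reals all_analysis.
From mathcomp Require Import ring.
Import Order.TTheory GRing.Theory Num.Theory.
Import numFieldTopology.Exports numFieldNormedType.Exports.
Local Open Scope ring_scope.

Lemma ord2P (a : 'I_2) : a = i1 \/ a = i2.
Proof. case: a => [[|[|n]]] H; [left|right|]; try exact/val_inj. by []. Qed.

Lemma i12 : (i1 == i2) = false. Proof. by []. Qed.
Lemma i21 : (i2 == i1) = false. Proof. by []. Qed.
Section S.
Variable R : realType.
Local Notation K := R[i].
Variable Rt : J -> K -> K.

Definition Sw (z : K) (w : word) : K :=
  match w with
  | [::] => Rt (i1,i1) z + Rt (i2,i2) z
  | y :: _ => if y == (i1,i1) then Rt (i1,i1) z + Rt (i2,i1) z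
              else if y == (i2,i2) then Rt (i2,i2) z + Rt (i1,i2) z
              else Rt (i1,i2) z + Rt (i2,i1) z
  end.

Lemma sumJ (F : J -> K) : \sum_(x : J) F x = F (i1,i1) + F (i1,i2) + F (i2,i1) + F (i2,i2).
Proof.
transitivity (\sum_(p : 'I_2 * 'I_2) F (p.1,p.2)); first by apply: eq_bigr => -[].
rewrite -(pair_bigA _ (fun a b => F (a,b))) /= !big_ord_recl !big_ord0 /=.
rewrite !addr0 !addrA. congr (_ + _ + _ + _); congr F; congr pair; exact/val_inj.
Qed.

Lemma CA_pt z (u : vec R) w : adm w -> CA Rt z u w = (z^-1 + Sw z w) * u w.
Proof.
move=> aw; rewrite /CA sumJ /unitJ /= ?eqxx ?i12 ?i21 /Defs.proj /= aw /=.
case: w aw => [|y s] aw /=.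
  ring.
case: y aw => a b aw /=.
by case: (ord2P a) => ->; case: (ord2P b) => -> /=; rewrite ?xpair_eqE ?eqxx ?i12 ?i21 /=; ring.
Qed.

Lemma BA_pt z (u : vec R) w : adm w -> BA Rt z u w = z / (1 + z * Sw z w) * u w.
Proof.
move=> aw; rewrite /BA /pvac /pJ /Defs.proj /= aw /=.
case: w aw => [|y s] aw /=; first ring.
case: y aw => a b aw /=.
by case: (ord2P a) => ->; case: (ord2P b) => -> /=; rewrite ?xpair_eqE ?eqxx ?i12 ?i21 /=; ring.
Qed.

Lemma BA_nadm z (u : vec R) w : ~~ adm w -> BA Rt z u w = 0.
Proof.
move=> aw; rewrite /BA /pvac /pJ /Defs.proj /= (negbTE aw) /=.
case: w aw => [|y s] aw //=; ring.
Qed.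

Lemma CA_nadm z (u : vec R) w : ~~ adm w -> CA Rt z u w = z^-1 * u w.
Proof.
move=> aw; rewrite /CA /unitJ /Defs.proj big1 ?addr0 // => x _.
by case: ifP; rewrite (negbTE aw) /= mulr0.
Qed.

Lemma geom_sum (n : nat) : \sum_(k < n) ((2:K)^-1) ^+ k = 2 - 2 * (2^-1) ^+ n.
Proof.
elim: n => [|n IH]; first by rewrite big_ord0 expr0 mulr1 subrr.
rewrite big_ord_recr /= IH exprS.
have h2 : (2:K) != 0 by rewrite pnatr_eq0.
by field.
Qed.

Lemma min_pos (x y : K) : 0 < x -> 0 < y -> exists d, [/\ 0 < d, d <= x & d <= y].
Proof.
move=> x0 y0; case xy: (x < y).
  by exists x; split => //; exact: ltW.
exists y; split => //.
by rewrite real_leNgt ?xy // gtr0_real.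
Qed.

Lemma Rbound (m : nat -> K) (Rf : K -> K) : is_Rtransform m Rf ->
  exists d : K, 0 < d /\ forall z, `|z| < d -> `|z * Rf z| < 2^-1.
Proof.
case => [[r [rho [rho0 hs]]] _].
set t := rho / 2.
have t0 : 0 < t by rewrite divr_gt0.
have trho : `|t| < rho.
  by rewrite gtr0_norm // /t ltr_pdivrMr // mulr_natr mulr2n ltrDl.
have := hs t trho => conv.
have /cvg_series_cvg_0 c0 : cvgn (series (fun k => r k * t ^+ k)).
  by apply/cvg_ex; exists (Rf t).
have /cvg_seq_bounded : cvgn (fun k => r k * t ^+ k) by apply/cvg_ex; exists 0.
move=> /ex_strict_bound_gt0 [M M0 hM].
have hM' : forall k, `|r k * t ^+ k| < M by move=> k; exact: (hM k I).
set B := 1 + 2 * M.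
have B0 : 0 < B by rewrite addr_gt0 // mulr_gt0.
have h1 : 0 < t / 2 by rewrite divr_gt0.
have h2 : 0 < (4 * B)^-1 by rewrite invr_gt0 mulr_gt0.
have [d [d0 d1 d2]] := min_pos _ _ h1 h2.
exists d; split => // z hz.
have zt : `|z| <= t / 2 by apply: le_trans d1; exact: ltW.
have zrho : `|z| < rho.
  have tt : t / 2 < `|t| by rewrite gtr0_norm // ltr_pdivrMr // mulr_natr mulr2n ltrDl.
  exact: le_lt_trans zt (lt_trans tt trho).
have psum : forall n, `|series (fun k => r k * z ^+ k) n| <= 2 * M.
  move=> n; rewrite /series /= big_mkord.
  apply: le_trans (ler_norm_sum _ _ _) _.
  apply: (@le_trans _ _ (\sum_(k < n) M * (2^-1) ^+ k)).
    apply: ler_sum => k _.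
    rewrite normrM normrX.
    apply: (@le_trans _ _ (`|r k| * (t/2)^+k)).
      apply: ler_pM => //; apply: lerXn2r => //; rewrite nnegrE //.
      exact: ltW.
    rewrite exprMn mulrA ler_pM2r; last by rewrite exprn_gt0 // invr_gt0.
    by have := hM' k; rewrite normrM normrX (gtr0_norm t0) => /ltW.
  rewrite -mulr_sumr geom_sum [2 * M]mulrC ler_pM2l //.
  by rewrite gerBl mulr_ge0 // exprn_ge0 // invr_ge0.
have := hs z zrho => /cvgrPdist_lt /(_ 1 ltr01) /filter_ex [n hn].
have RB : `|Rf z| < B.
  rewrite /B -(subrK (series (fun k => r k * z ^+ k) n) (Rf z)).
  apply: le_lt_trans (ler_normD _ _) _.
  exact: ltr_leD hn (psum n).
rewrite normrM.
apply: (@le_lt_trans _ _ ((4 * B)^-1 * B)).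
  apply: ler_pM => //; last exact: ltW.
  exact: le_trans (ltW hz) d2.
rewrite invfM -mulrA mulVf ?gt_eqF // mulr1.
by rewrite ltf_pV2 ?posrE ?ltr_nat.
Qed.

Lemma Sw_small z w : (forall x, `|z * Rt x z| < 2^-1) -> `|z * Sw z w| < 1.
Proof.
move=> hx.
have H : forall a b, `|z * (Rt a z + Rt b z)| < 1.
  move=> a b; rewrite mulrDr; apply: le_lt_trans (ler_normD _ _) _.
  by rewrite [X in _ < X](splitr 1) mul1r ltrD.
by case: w => [|y s] /=; [|case: ifP => _; [|case: ifP => _]]; apply: H.
Qed.

Lemma one_add_neq0 (a : K) : `|a| < 1 -> 1 + a != 0.
Proof.
move=> ha; apply/eqP => h.
have : a = -1 by apply/eqP; rewrite -addr_eq0 addrC h.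
by move=> e; move: ha; rewrite e normrN normr1 ltxx.
Qed.
End S.
Arguments Rbound {R m Rf}. Arguments min_pos {R}. Arguments Sw_small {R Rt}.
Arguments one_add_neq0 {R}. Arguments Sw {R}.

Theorem proposition5p2 (R : realType) (alpha : J -> R)
  (halpha : forall x : J, 0 < alpha x)
  (f : J -> {poly R[i]}) (Rt : J -> R[i] -> R[i])
  (hRt : forall x : J, is_Rtransform (moments alpha f x) (Rt x)) :
  exists delta : R[i], 0 < delta /\
    forall z : R[i], 0 < `|z| < delta ->
      forall v : vec R, inN v ->
        BA Rt z (CA Rt z v) = v /\ CA Rt z (BA Rt z v) = v.
Proof.
have [d1 [d10 hd1]] := Rbound (hRt (i1,i1)).
have [d2 [d20 hd2]] := Rbound (hRt (i1,i2)).
have [d3 [d30 hd3]] := Rbound (hRt (i2,i1)).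
have [d4 [d40 hd4]] := Rbound (hRt (i2,i2)).
have [e1 [e10 e11 e12]] := min_pos _ _ d10 d20.
have [e2 [e20 e21 e22]] := min_pos _ _ d30 d40.
have [e [e0 ee1 ee2]] := min_pos _ _ e10 e20.
exists e; split => // z /andP [z0 ze] v hv.
have zn0 : z != 0 by rewrite -normr_gt0.
have hx : forall x, `|z * Rt x z| < 2^-1.
  move=> [a b]; case: (ord2P a) => ->; case: (ord2P b) => ->.
  - apply: hd1; apply: lt_le_trans ze _; exact: le_trans ee1 e11.
  - apply: hd2; apply: lt_le_trans ze _; exact: le_trans ee1 e12.
  - apply: hd3; apply: lt_le_trans ze _; exact: le_trans ee2 e21.
  - apply: hd4; apply: lt_le_trans ze _; exact: le_trans ee2 e22.
have inv : forall w, z / (1 + z * Sw Rt z w) * (z^-1 + Sw Rt z w) = 1.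
  move=> w; have := one_add_neq0 _ (Sw_small _ w hx) => h.
  by field; rewrite h zn0.
split; apply: funext => w; case aw: (adm w).
- by rewrite BA_pt // CA_pt // mulrA inv mul1r.
- by rewrite BA_nadm ?aw // hv ?aw.
- by rewrite CA_pt // BA_pt // mulrA [X in X * _]mulrC inv mul1r.
- by rewrite CA_nadm ?aw // BA_nadm ?aw // mulr0 hv ?aw.
Qed.
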